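(* Let $2\le N\le 4$, $k=2$, $T=2$, and suppose $p_{11}<p_{01}$. Then for every initial belief vector $\omega(1)\in[0,1]^N$, the myopic sensing policy (with any tie-breaking) is optimal. That is, its expected total reward over the two slots equals the maximum expected total reward over the two slots achievable by any sensing policy.
   Context: Opportunistic spectrum access model. There are $N$ channels. The state $S_i(t)\in\{0,1\}$ of channel $i$ in slot $t$ (0 = busy, 1 = idle) evolves as a two-state discrete-time Markov chain with transition probabilities $p_{ij}=\Pr(S_i(t+1)=j\mid S_i(t)=i)$. The chains are independent across channels and all have the same transition probabilities $p_{01},p_{11}\in[0,1]$. The initial states are independent with $\Pr(S_i(1)=1)=\omega_i(1)$. In each slot $t=1,\dots,T$, a secondary user chooses a set $\mathcal{A}(t)$ of exactly $k$ channels to sense, based on past actions and observations. It observes the states of the sensed channels and obtains reward $1$ if at least one sensed channel is idle, and reward $0$ otherwise. The belief $\omega_i(t)$ is the conditional probability that $S_i(t)=1$ given past actions and observations. The expected immediate reward of action $\mathcal{A}(t)$ is $1-\prod_{i\in\mathcal{A}(t)}(1-\omega_i(t))$. Beliefs update as follows: $\omega_i(t+1)=p_{11}$ if $i\in\mathcal{A}(t)$ and $S_i(t)=1$; $\omega_i(t+1)=p_{01}$ if $i\in\mathcal{A}(t)$ and $S_i(t)=0$; and $\omega_i(t+1)=\tau(\omega_i(t))$ if $i\notin\mathcal{A}(t)$, where $\tau(\omega)=\omega p_{11}+(1-\omega)p_{01}$. A policy maps histories to actions. The objective is to maximize the expected total (equivalently, average) reward over slots $1,\dots,T$. The myopic sensing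 policy senses, in every slot, $k$ channels with the largest current beliefs $\omega_i(t)$, i.e. it maximizes the immediate expected reward. *)

(* Defs.v *)
From HB Require Import structures.
From mathcomp Require Import all_boot all_order all_algebra.
Set Implicit Arguments. Unset Strict Implicit. Unset Printing Implicit Defensive.
Import Order.TTheory GRing.Theory Num.Theory.
Local Open Scope ring_scope.

Section OSA.
Variables (R : realFieldType) (N : nat).

Definition tau (p01 p11 w : R) : R := w * p11 + (1 - w) * p01.

Definition exp_reward (b : 'I_N -> R) (A : {set 'I_N}) : R :=
  1 - \prod_(i in A) (1 - b i).

Definition obs (A : {set 'I_N}) (s : {ffun 'I_N -> bool}) : {ffun 'I_N -> bool} :=
  [ffun i => (i \in A) && s i].

Definition belief2 (p01 p11 : R) (w : 'I_N -> R) (A : {set 'I_N})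
  (o : {ffun 'I_N -> bool}) (i : 'I_N) : R :=
  if i \in A then (if o i then p11 else p01) else tau p01 p11 (w i).

Definition init_prob (w : 'I_N -> R) (s : {ffun 'I_N -> bool}) : R :=
  \prod_i (if s i then w i else 1 - w i).

(* A (deterministic) policy for horizon T = 2: a first action, and a
   second action as a function of the slot-1 observation. *)
Definition policy := ({set 'I_N} * ({ffun 'I_N -> bool} -> {set 'I_N}))%type.

Definition valid_policy (k : nat) (pol : policy) : Prop :=
  #|pol.1| = k /\ forall o, #|pol.2 o| = k.

Definition top_k (k : nat) (b : 'I_N -> R) (A : {set 'I_N}) : Prop :=
  #|A| = k /\ forall i j, i \in A -> j \notin A -> b j <= b i.

(* myopic policy with arbitrary tie-breaking *)
Definition is_myopic (k : nat) (p01 p11 : R) (w : 'I_N -> R) (pol : policy) : Prop :=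
  top_k k w pol.1 /\ forall o, top_k k (belief2 p01 p11 w pol.1 o) (pol.2 o).

Definition total_reward (p01 p11 : R) (w : 'I_N -> R) (pol : policy) : R :=
  exp_reward w pol.1 +
  \sum_(s : {ffun 'I_N -> bool})
     init_prob w s *
     exp_reward (belief2 p01 p11 w pol.1 (obs pol.1 s)) (pol.2 (obs pol.1 s)).

End OSA.

(* Main.v *)
Require Import Defs.
From HB Require Import structures.
From mathcomp Require Import all_boot all_order all_algebra.
From mathcomp Require Import ring lra zify.
Set Implicit Arguments. Unset Strict Implicit. Unset Printing Implicit Defensive.
Import Order.TTheory GRing.Theory Num.Theory.
Local Open Scope ring_scope.

Definition pr (R : realFieldType) (w : R) (x : bool) : R := if x then w else 1 - w.

Lemma sum2 (R : realFieldType) (N : nat) (w : 'I_N -> R) (a b : 'I_N)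
  (g : bool -> bool -> R) : a != b ->
  \sum_(s : {ffun 'I_N -> bool}) init_prob w s * g (s a) (s b) =
  \sum_(x : bool) \sum_(y : bool) pr (w a) x * pr (w b) y * g x y.
Proof.
move=> nab.
transitivity (\sum_(s : {ffun 'I_N -> bool}) \sum_(x : bool) \sum_(y : bool)
   init_prob w s * ((((s a == x) && (s b == y)))%:R * g x y)).
  apply: eq_bigr => s _; rewrite !big_bool /=.
  by case: (s a); case: (s b) => /=; rewrite ?mul1r ?mul0r ?mulr0 ?addr0 ?add0r.
rewrite exchange_big; apply: eq_bigr => x _.
rewrite exchange_big; apply: eq_bigr => y _.
pose e (i : 'I_N) (j : bool) : R :=
  if i == a then (j == x)%:R else if i == b then (j == y)%:R else 1.
transitivity (\sum_(s : {ffun 'I_N -> bool}) (\prod_i (pr (w i) (s i) * e i (s i))) * g x y).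
  apply: eq_bigr => s _; rewrite big_split /= mulrA; congr (_ * _ * _).
  rewrite (bigD1 a) //= (bigD1 b) /=; last by rewrite eq_sym.
  rewrite [X in _ * (_ * X)]big1 ?mulr1; last first.
    by move=> i /andP[/negPf ia /negPf ib]; rewrite /e ia ib.
  rewrite /e eqxx [b == a]eq_sym (negPf nab) eqxx.
  by case: (s a); case: (s b); clear e; case: x; case: y; rewrite /= ?mulr1 ?mulr0 ?mul0r.
rewrite -mulr_suml -(bigA_distr_bigA (fun i (j : bool) => pr (w i) j * e i j)) /=.
rewrite (bigD1 a) //= (bigD1 b) /=; last by rewrite eq_sym.
rewrite [X in _ * (_ * X) * _]big1 ?mulr1; last first.
  move=> i /andP[/negPf ia /negPf ib]; rewrite big_bool /e ia ib /= !mulr1.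
  by rewrite /pr addrC subrK.
rewrite !big_bool /e eqxx [b == a]eq_sym (negPf nab) eqxx /pr.
by clear e; case: x; case: y => /=; rewrite ?mulr1 ?mulr0 ?addr0 ?add0r.
Qed.

Lemma er_pair (R : realFieldType) (N : nat) (b : 'I_N -> R) (x y : 'I_N) :
  x != y -> exp_reward b [set x; y] = 1 - (1 - b x) * (1 - b y).
Proof.
move=> nxy; rewrite /exp_reward big_setU1 ?big_set1 //= inE; exact: nxy.
Qed.

Lemma in2 (N : nat) (x y i : 'I_N) : i \in [set x; y] -> i = x \/ i = y.
Proof. by rewrite !inE => /orP[/eqP->|/eqP->]; [left|right]. Qed.

Lemma top_max (R : realFieldType) (N : nat) (b : 'I_N -> R) (T S : {set 'I_N}) :
  (forall i, b i <= 1) -> top_k 2 b T -> #|S| = 2 ->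
  exp_reward b S <= exp_reward b T.
Proof.
move=> b1 [cT topT] cS.
have [t1 [t2 [n12 eT]]] : exists x y, x != y /\ T = [set x; y].
  by apply/cards2P; rewrite cT.
have [s1 [s2 [n12' eS]]] : exists x y, x != y /\ S = [set x; y].
  by apply/cards2P; rewrite cS.
have key : forall i, i = t1 \/ i = t2 \/ (b i <= b t1 /\ b i <= b t2).
  move=> i; case: (boolP (i \in T)) => [|iT].
    by rewrite eT => /in2 [->|->]; [left|right;left].
  right; right; split; apply: topT => //; rewrite eT !inE eqxx ?orbT //.
rewrite eS eT !er_pair //.
have h1 := b1 t1; have h2 := b1 t2; have h3 := b1 s1; have h4 := b1 s2.
case: (key s1) => [E1|[E1|[E1 F1]]]; case: (key s2) => [E2|[E2|[E2 F2]]];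
  subst; rewrite ?eqxx // in n12' *; try nra.
Qed.

Definition V4 (R : realFieldType) (p01 p11 wa wb wc wd : R) : R :=
  (1 - (1 - wa) * (1 - wb)) +
  (wa * (wb * (1 - (1 - tau p01 p11 wc) * (1 - tau p01 p11 wd)) +
         (1 - wb) * (1 - (1 - p01) * (1 - tau p01 p11 (Num.min wc wd)))) +
   (1 - wa) * (wb * (1 - (1 - p01) * (1 - tau p01 p11 (Num.min wc wd))) +
         (1 - wb) * (1 - (1 - p01) * (1 - p01)))).

Definition V3 (R : realFieldType) (p01 p11 wa wb wc : R) : R :=
  (1 - (1 - wa) * (1 - wb)) +
  (wa * (wb * (1 - (1 - p11) * (1 - tau p01 p11 wc)) +
         (1 - wb) * (1 - (1 - p01) * (1 - tau p01 p11 wc))) +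
   (1 - wa) * (wb * (1 - (1 - p01) * (1 - tau p01 p11 wc)) +
         (1 - wb) * (1 - (1 - p01) * (1 - p01)))).

Lemma V4_ab (R : realFieldType) (p01 p11 wa wb wc wd : R) :
  V4 p01 p11 wa wb wc wd = V4 p01 p11 wb wa wc wd.
Proof. rewrite /V4 /tau; ring. Qed.

Lemma V4_cd (R : realFieldType) (p01 p11 wa wb wc wd : R) :
  V4 p01 p11 wa wb wc wd = V4 p01 p11 wa wb wd wc.
Proof. rewrite /V4 minC /tau; ring. Qed.

Lemma V3_ab (R : realFieldType) (p01 p11 wa wb wc : R) :
  V3 p01 p11 wa wb wc = V3 p01 p11 wb wa wc.
Proof. rewrite /V3 /tau; ring. Qed.

Lemma V3_sw (R : realFieldType) (p01 p11 wa wb wc : R) :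
  wa <= 1 -> wb <= wc -> V3 p01 p11 wa wb wc <= V3 p01 p11 wa wc wb.
Proof.
move=> h1 h2; rewrite -subr_ge0.
have -> : V3 p01 p11 wa wc wb - V3 p01 p11 wa wb wc = (wc - wb) * (1 - wa).
  by rewrite /V3 /tau; ring.
by apply: mulr_ge0; lra.
Qed.

Lemma V4_sw (R : realFieldType) (p01 p11 wa wb wc wd : R) :
  0 <= p11 -> p11 <= p01 -> p01 <= 1 ->
  0 <= wa <= 1 -> 0 <= wb <= 1 -> 0 <= wc <= 1 -> 0 <= wd <= 1 ->
  wb <= wc -> V4 p01 p11 wa wb wc wd <= V4 p01 p11 wa wc wb wd.
Proof.
move=> hp1 hp2 hp3 /andP[ha0 ha1] /andP[hb0 hb1] /andP[hc0 hc1] /andP[hd0 hd1] hbc.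
rewrite -subr_ge0.
set q := 1 - p01; set dl := p01 - p11.
have q0 : 0 <= q by rewrite /q; lra.
have q1 : q <= 1 by rewrite /q; lra.
have d0 : 0 <= dl by rewrite /dl; lra.
have d1 : dl <= 1 by rewrite /dl; lra.
have qd : q * dl <= 1 by nra.
have qd0 : 0 <= q * dl by nra.
case: (lerP wd wb) => hdb.
  have m1 : Num.min wc wd = wd by apply/min_idPr; lra.
  have m2 : Num.min wb wd = wd by apply/min_idPr.
  have -> : V4 p01 p11 wa wc wb wd - V4 p01 p11 wa wb wc wd =
     (wc - wb) * (1 - wa) * (1 - q * dl * wd).
    by rewrite /V4 m1 m2 /tau /q /dl; ring.
  apply: mulr_ge0; [apply: mulr_ge0|]; try lra.
  have : q * dl * wd <= q * dl * 1 by apply: ler_wpM2l.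
  lra.
case: (lerP wd wc) => hdc.
  have m1 : Num.min wc wd = wd by apply/min_idPr.
  have m2 : Num.min wb wd = wb by apply/min_idPl; lra.
  have -> : V4 p01 p11 wa wc wb wd - V4 p01 p11 wa wb wc wd =
     (1 - wa) * ((wc - wd) * (1 - q * dl * wb) + (wd - wb)) +
     wa * (q * dl * (wd - wb) * (1 - wc)).
    by rewrite /V4 m1 m2 /tau /q /dl; ring.
  have : q * dl * wb <= q * dl * 1 by apply: ler_wpM2l.
  move=> h.
  apply: addr_ge0; apply: mulr_ge0; try lra.
    apply: addr_ge0; [apply: mulr_ge0|]; lra.
  apply: mulr_ge0; [apply: mulr_ge0|]; lra.
have m1 : Num.min wc wd = wc by apply/min_idPl; lra.
have m2 : Num.min wb wd = wb by apply/min_idPl; lra.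
have -> : V4 p01 p11 wa wc wb wd - V4 p01 p11 wa wb wc wd =
   (1 - wa) * (wc - wb) + wa * (q * dl * (wc - wb) * (1 - wd)).
  by rewrite /V4 m1 m2 /tau /q /dl; ring.
apply: addr_ge0; apply: mulr_ge0; try lra.
apply: mulr_ge0; [apply: mulr_ge0|]; lra.
Qed.

Definition mk (N : nat) (a : 'I_N) (x y : bool) : {ffun 'I_N -> bool} :=
  [ffun i => if i == a then x else y].

Lemma obs_mk (N : nat) (A : {set 'I_N}) (a b : 'I_N) (s : {ffun 'I_N -> bool}) :
  A = [set a; b] -> obs A s = obs A (mk a (s a) (s b)).
Proof.
move=> eA; apply/ffunP => i; rewrite !ffunE.
case: (boolP (i \in A)) => //=; rewrite eA => /in2 [->|->]; first by rewrite eqxx.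
by case: eqP => [->|].
Qed.

Lemma bel_in1 (R : realFieldType) (N : nat) (p01 p11 : R) (w : 'I_N -> R)
  (A : {set 'I_N}) (a b : 'I_N) x y :
  A = [set a; b] ->
  belief2 p01 p11 w A (obs A (mk a x y)) a = if x then p11 else p01.
Proof. by move=> eA; rewrite /belief2 !ffunE eA !inE eqxx. Qed.

Lemma bel_in2 (R : realFieldType) (N : nat) (p01 p11 : R) (w : 'I_N -> R)
  (A : {set 'I_N}) (a b : 'I_N) x y :
  A = [set a; b] -> a != b ->
  belief2 p01 p11 w A (obs A (mk a x y)) b = if y then p11 else p01.
Proof. by move=> eA nab; rewrite /belief2 !ffunE eA !inE eqxx orbT /= eq_sym (negPf nab). Qed.

Lemma bel_out (R : realFieldType) (N : nat) (p01 p11 : R) (w : 'I_N -> R)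
  (A : {set 'I_N}) (o : {ffun 'I_N -> bool}) (c : 'I_N) :
  c \notin A -> belief2 p01 p11 w A o c = tau p01 p11 (w c).
Proof. by move=> cA; rewrite /belief2 (negPf cA). Qed.

Lemma bel_range (R : realFieldType) (N : nat) (p01 p11 : R) (w : 'I_N -> R)
  (A : {set 'I_N}) (o : {ffun 'I_N -> bool}) :
  0 <= p11 <= 1 -> 0 <= p01 <= 1 -> (forall i, 0 <= w i <= 1) ->
  forall i, belief2 p01 p11 w A o i <= 1.
Proof.
move=> /andP[? ?] /andP[? ?] hw i; rewrite /belief2.
case: (i \in A); first by case: (o i).
have /andP[? ?] := hw i; rewrite /tau; nra.
Qed.

Lemma total_sum (R : realFieldType) (N : nat) (p01 p11 : R) (w : 'I_N -> R)
  (pol : policy N) (a b : 'I_N) :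
  a != b -> pol.1 = [set a; b] ->
  total_reward p01 p11 w pol = 1 - (1 - w a) * (1 - w b) +
  \sum_(x : bool) \sum_(y : bool) pr (w a) x * pr (w b) y *
     exp_reward (belief2 p01 p11 w pol.1 (obs pol.1 (mk a x y)))
                (pol.2 (obs pol.1 (mk a x y))).
Proof.
move=> nab eA; rewrite /total_reward eA er_pair // -eA; congr (_ + _).
rewrite -(sum2 w (fun x y => exp_reward (belief2 p01 p11 w pol.1 (obs pol.1 (mk a x y)))
                (pol.2 (obs pol.1 (mk a x y)))) nab).
by apply: eq_bigr => s _; rewrite -(obs_mk s eA).
Qed.

Lemma gen2 (R : realFieldType) (N : nat) (p01 p11 : R) (w : 'I_N -> R)
  (A S0 Q : {set 'I_N}) (o : {ffun 'I_N -> bool}) (v : R) :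
  0 <= p11 <= 1 -> 0 <= p01 <= 1 -> (forall i, 0 <= w i <= 1) ->
  top_k 2 (belief2 p01 p11 w A o) S0 ->
  exp_reward (belief2 p01 p11 w A o) S0 = v -> #|Q| = 2 ->
  exp_reward (belief2 p01 p11 w A o) Q <= v /\
  (top_k 2 (belief2 p01 p11 w A o) Q -> exp_reward (belief2 p01 p11 w A o) Q = v).
Proof.
move=> h1 h2 hw hS0 <- hQ; have hb := bel_range A o h1 h2 hw.
split; first exact: top_max.
move=> hT; apply/eqP; rewrite eq_le (top_max hb hT) ?(top_max hb hS0) //.
by case: hS0.
Qed.

Lemma tau_rng (R : realFieldType) (p01 p11 w : R) :
  p11 <= p01 -> 0 <= w <= 1 -> p11 <= tau p01 p11 w <= p01.
Proof. move=> h /andP[? ?]; rewrite /tau; apply/andP; split; nra. Qed.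

Lemma tau_mono (R : realFieldType) (p01 p11 w v : R) :
  p11 <= p01 -> w <= v -> tau p01 p11 v <= tau p01 p11 w.
Proof. move=> h hv; rewrite /tau; nra. Qed.

Lemma K4 (R : realFieldType) (N : nat) (p01 p11 : R) (w : 'I_N -> R)
  (pol : policy N) (a b c d : 'I_N) :
  0 <= p11 -> p11 <= p01 -> p01 <= 1 -> (forall i, 0 <= w i <= 1) ->
  a != b -> c != d -> pol.1 = [set a; b] -> ~: pol.1 = [set c; d] ->
  (forall o, #|pol.2 o| = 2) ->
  total_reward p01 p11 w pol <= V4 p01 p11 (w a) (w b) (w c) (w d) /\
  ((forall o, top_k 2 (belief2 p01 p11 w pol.1 o) (pol.2 o)) ->
    total_reward p01 p11 w pol = V4 p01 p11 (w a) (w b) (w c) (w d)).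
Proof.
move=> hp0 hp1 hp2 hw nab ncd eA eC hq.
have h1 : 0 <= p11 <= 1 by apply/andP; split; lra.
have h2 : 0 <= p01 <= 1 by apply/andP; split; lra.
have cA : c \notin pol.1 by rewrite -in_setC eC !inE eqxx.
have dA : d \notin pol.1 by rewrite -in_setC eC !inE eqxx orbT.
have nca : (c == a) = false by move: cA; rewrite eA !inE; case: (c == a).
have ncb : (c == b) = false by move: cA; rewrite eA !inE; case: (c == b); rewrite ?orbT.
have nda : (d == a) = false by move: dA; rewrite eA !inE; case: (d == a).
have ndb : (d == b) = false by move: dA; rewrite eA !inE; case: (d == b); rewrite ?orbT.
have nac : (a == c) = false by rewrite eq_sym.
have nbc : (b == c) = false by rewrite eq_sym.
have nad : (a == d) = false by rewrite eq_sym.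
have nbd : (b == d) = false by rewrite eq_sym.
have nab' : (a == b) = false := negPf nab.
have nba : (b == a) = false by rewrite eq_sym.
have ncd' : (c == d) = false := negPf ncd.
have ndc : (d == c) = false by rewrite eq_sym.
have cover : forall i, i = a \/ i = b \/ i = c \/ i = d.
  move=> i; case: (boolP (i \in pol.1)) => [|iA].
    by rewrite eA => /in2 [->|->]; auto.
  have : i \in ~: pol.1 by rewrite inE.
  by rewrite eC => /in2 [->|->]; auto.
have ba x y : belief2 p01 p11 w pol.1 (obs pol.1 (mk a x y)) a = if x then p11 else p01.
  by rewrite {1 2}eA; apply: bel_in1.
have bb x y : belief2 p01 p11 w pol.1 (obs pol.1 (mk a x y)) b = if y then p11 else p01.
  by rewrite {1 2}eA; apply: bel_in2.
have bc o : belief2 p01 p11 w pol.1 o c = tau p01 p11 (w c) by apply: bel_out.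
have bd o : belief2 p01 p11 w pol.1 o d = tau p01 p11 (w d) by apply: bel_out.
have tc := tau_rng hp1 (hw c); have td := tau_rng hp1 (hw d).
move: tc td => /andP[tc1 tc2] /andP[td1 td2].
pose Gb (x y : bool) : R := if x then (if y then 1 - (1 - tau p01 p11 (w c)) * (1 - tau p01 p11 (w d))
   else 1 - (1 - p01) * (1 - tau p01 p11 (Num.min (w c) (w d))))
   else (if y then 1 - (1 - p01) * (1 - tau p01 p11 (Num.min (w c) (w d)))
   else 1 - (1 - p01) * (1 - p01)).
have step : forall x y,
  exp_reward (belief2 p01 p11 w pol.1 (obs pol.1 (mk a x y))) (pol.2 (obs pol.1 (mk a x y)))
   <= Gb x y /\
  (top_k 2 (belief2 p01 p11 w pol.1 (obs pol.1 (mk a x y))) (pol.2 (obs pol.1 (mk a x y))) ->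
  exp_reward (belief2 p01 p11 w pol.1 (obs pol.1 (mk a x y))) (pol.2 (obs pol.1 (mk a x y)))
   = Gb x y).
  move=> x y.
  have [m [Sm [m1 m2]]] : exists m, (m = c \/ m = d) /\ (Num.min (w c) (w d) = w m /\
     (forall j, j = c \/ j = d -> tau p01 p11 (w j) <= tau p01 p11 (w m))).
    case: (lerP (w c) (w d)) => hm.
      exists c; split; first by left.
      split; first by [].
      by move=> j [->|->]; [lra|apply: tau_mono].
    exists d; split; first by right.
    split; first by [].
    by move=> j [->|->]; [apply: tau_mono; lra|lra].
  have mc := m2 c (or_introl erefl); have md := m2 d (or_intror erefl).
  have nma : (m == a) = false by case: Sm => ->.
  have nmb : (m == b) = false by case: Sm => ->.
  have nam : (a == m) = false by rewrite eq_sym.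
  have nbm : (b == m) = false by rewrite eq_sym.
  have bm o : belief2 p01 p11 w pol.1 o m = tau p01 p11 (w m) by case: Sm => ->.
  case: Sm => E; subst m; case: x; case: y.
  - apply: (gen2 (S0 := [set c; d])) => //.
    + split; first by rewrite cards2 ?nab' ?ncd' ?nbc ?nbd ?nac ?nad. move=> i j; rewrite !inE; case: (cover i) => [->|[->|[->|->]]]; case: (cover j) => [->|[->|[->|->]]]; rewrite ?eqxx ?nca ?ncb ?nda ?ndb ?nac ?nbc ?nad ?nbd ?nab' ?nba ?ncd' ?ndc //= => _ _; rewrite ?ba ?bb ?bc ?bd /=; first [done | lra].
    + by rewrite /Gb er_pair // bc bd.
  - apply: (gen2 (S0 := [set b; c])) => //.
    + split; first by rewrite cards2 ?nab' ?ncd' ?nbc ?nbd ?nac ?nad. move=> i j; rewrite !inE; case: (cover i) => [->|[->|[->|->]]]; case: (cover j) => [->|[->|[->|->]]]; rewrite ?eqxx ?nca ?ncb ?nda ?ndb ?nac ?nbc ?nad ?nbd ?nab' ?nba ?ncd' ?ndc //= => _ _; rewrite ?ba ?bb ?bc ?bd /=; first [done | lra].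
    + by rewrite /Gb er_pair ?nbc // bb bc m1.
  - apply: (gen2 (S0 := [set a; c])) => //.
    + split; first by rewrite cards2 ?nab' ?ncd' ?nbc ?nbd ?nac ?nad. move=> i j; rewrite !inE; case: (cover i) => [->|[->|[->|->]]]; case: (cover j) => [->|[->|[->|->]]]; rewrite ?eqxx ?nca ?ncb ?nda ?ndb ?nac ?nbc ?nad ?nbd ?nab' ?nba ?ncd' ?ndc //= => _ _; rewrite ?ba ?bb ?bc ?bd /=; first [done | lra].
    + by rewrite /Gb er_pair ?nac // ba bc m1.
  - apply: (gen2 (S0 := [set a; b])) => //.
    + split; first by rewrite cards2 ?nab' ?ncd' ?nbc ?nbd ?nac ?nad. move=> i j; rewrite !inE; case: (cover i) => [->|[->|[->|->]]]; case: (cover j) => [->|[->|[->|->]]]; rewrite ?eqxx ?nca ?ncb ?nda ?ndb ?nac ?nbc ?nad ?nbd ?nab' ?nba ?ncd' ?ndc //= => _ _; rewrite ?ba ?bb ?bc ?bd /=; first [done | lra].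
    + by rewrite /Gb er_pair // ba bb.
  - apply: (gen2 (S0 := [set c; d])) => //.
    + split; first by rewrite cards2 ?nab' ?ncd' ?nbc ?nbd ?nac ?nad. move=> i j; rewrite !inE; case: (cover i) => [->|[->|[->|->]]]; case: (cover j) => [->|[->|[->|->]]]; rewrite ?eqxx ?nca ?ncb ?nda ?ndb ?nac ?nbc ?nad ?nbd ?nab' ?nba ?ncd' ?ndc //= => _ _; rewrite ?ba ?bb ?bc ?bd /=; first [done | lra].
    + by rewrite /Gb er_pair // bc bd.
  - apply: (gen2 (S0 := [set b; d])) => //.
    + split; first by rewrite cards2 ?nab' ?ncd' ?nbc ?nbd ?nac ?nad. move=> i j; rewrite !inE; case: (cover i) => [->|[->|[->|->]]]; case: (cover j) => [->|[->|[->|->]]]; rewrite ?eqxx ?nca ?ncb ?nda ?ndb ?nac ?nbc ?nad ?nbd ?nab' ?nba ?ncd' ?ndc //= => _ _; rewrite ?ba ?bb ?bc ?bd /=; first [done | lra].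
    + by rewrite /Gb er_pair ?nbd // bb bd m1.
  - apply: (gen2 (S0 := [set a; d])) => //.
    + split; first by rewrite cards2 ?nab' ?ncd' ?nbc ?nbd ?nac ?nad. move=> i j; rewrite !inE; case: (cover i) => [->|[->|[->|->]]]; case: (cover j) => [->|[->|[->|->]]]; rewrite ?eqxx ?nca ?ncb ?nda ?ndb ?nac ?nbc ?nad ?nbd ?nab' ?nba ?ncd' ?ndc //= => _ _; rewrite ?ba ?bb ?bc ?bd /=; first [done | lra].
    + by rewrite /Gb er_pair ?nad // ba bd m1.
  - apply: (gen2 (S0 := [set a; b])) => //.
    + split; first by rewrite cards2 ?nab' ?ncd' ?nbc ?nbd ?nac ?nad. move=> i j; rewrite !inE; case: (cover i) => [->|[->|[->|->]]]; case: (cover j) => [->|[->|[->|->]]]; rewrite ?eqxx ?nca ?ncb ?nda ?ndb ?nac ?nbc ?nad ?nbd ?nab' ?nba ?ncd' ?ndc //= => _ _; rewrite ?ba ?bb ?bc ?bd /=; first [done | lra].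
    + by rewrite /Gb er_pair // ba bb.
have eqV : 1 - (1 - w a) * (1 - w b) +
   \sum_(x : bool) \sum_(y : bool) pr (w a) x * pr (w b) y * Gb x y =
   V4 p01 p11 (w a) (w b) (w c) (w d).
  by rewrite !big_bool /Gb /pr /V4 /=; ring.
have prp : forall x y, 0 <= pr (w a) x * pr (w b) y.
  move: (hw a) (hw b) => /andP[? ?] /andP[? ?].
  by case; case; rewrite /pr; apply: mulr_ge0; lra.
rewrite (total_sum p01 p11 w nab eA) -eqV; split.
  rewrite lerD2l; apply: ler_sum => x _; apply: ler_sum => y _.
  by apply: ler_wpM2l; [exact: prp | exact: (step x y).1].
move=> top; congr (_ + _); apply: eq_bigr => x _; apply: eq_bigr => y _.
by rewrite (step x y).2.
Qed.

Lemma K3 (R : realFieldType) (N : nat) (p01 p11 : R) (w : 'I_N -> R)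
  (pol : policy N) (a b c : 'I_N) :
  0 <= p11 -> p11 <= p01 -> p01 <= 1 -> (forall i, 0 <= w i <= 1) ->
  a != b -> pol.1 = [set a; b] -> ~: pol.1 = [set c] ->
  (forall o, #|pol.2 o| = 2) ->
  total_reward p01 p11 w pol <= V3 p01 p11 (w a) (w b) (w c) /\
  ((forall o, top_k 2 (belief2 p01 p11 w pol.1 o) (pol.2 o)) ->
    total_reward p01 p11 w pol = V3 p01 p11 (w a) (w b) (w c)).
Proof.
move=> hp0 hp1 hp2 hw nab eA eC hq.
have h1 : 0 <= p11 <= 1 by apply/andP; split; lra.
have h2 : 0 <= p01 <= 1 by apply/andP; split; lra.
have cA : c \notin pol.1 by rewrite -in_setC eC !inE eqxx.
have nca : (c == a) = false by move: cA; rewrite eA !inE; case: (c == a).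
have ncb : (c == b) = false by move: cA; rewrite eA !inE; case: (c == b); rewrite ?orbT.
have nac : (a == c) = false by rewrite eq_sym.
have nbc : (b == c) = false by rewrite eq_sym.
have nab' : (a == b) = false := negPf nab.
have nba : (b == a) = false by rewrite eq_sym.
have cover : forall i, i = a \/ i = b \/ i = c.
  move=> i; case: (boolP (i \in pol.1)) => [|iA].
    by rewrite eA => /in2 [->|->]; auto.
  have : i \in ~: pol.1 by rewrite inE.
  by rewrite eC inE => /eqP ->; auto.
have ba x y : belief2 p01 p11 w pol.1 (obs pol.1 (mk a x y)) a = if x then p11 else p01.
  by rewrite {1 2}eA; apply: bel_in1.
have bb x y : belief2 p01 p11 w pol.1 (obs pol.1 (mk a x y)) b = if y then p11 else p01.
  by rewrite {1 2}eA; apply: bel_in2.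
have bc o : belief2 p01 p11 w pol.1 o c = tau p01 p11 (w c) by apply: bel_out.
have tc := tau_rng hp1 (hw c).
move: tc => /andP[tc1 tc2].
pose Gb (x y : bool) : R := if x then (if y then 1 - (1 - p11) * (1 - tau p01 p11 (w c))
   else 1 - (1 - p01) * (1 - tau p01 p11 (w c)))
   else (if y then 1 - (1 - p01) * (1 - tau p01 p11 (w c))
   else 1 - (1 - p01) * (1 - p01)).
have step : forall x y,
  exp_reward (belief2 p01 p11 w pol.1 (obs pol.1 (mk a x y))) (pol.2 (obs pol.1 (mk a x y)))
   <= Gb x y /\
  (top_k 2 (belief2 p01 p11 w pol.1 (obs pol.1 (mk a x y))) (pol.2 (obs pol.1 (mk a x y))) ->
  exp_reward (belief2 p01 p11 w pol.1 (obs pol.1 (mk a x y))) (pol.2 (obs pol.1 (mk a x y)))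
   = Gb x y).
  move=> x y; case: x; case: y.
  - apply: (gen2 (A := pol.1) (S0 := [set a; c])) => //.
    + split; first by rewrite cards2 ?nab' ?nbc ?nac. move=> i j; rewrite !inE; case: (cover i) => [->|[->|->]]; case: (cover j) => [->|[->|->]]; rewrite ?eqxx ?nca ?ncb ?nac ?nbc ?nab' ?nba //= => _ _; rewrite ?ba ?bb ?bc /=; first [done | lra].
    + by rewrite /Gb er_pair ?nac // ba bc.
  - apply: (gen2 (A := pol.1) (S0 := [set b; c])) => //.
    + split; first by rewrite cards2 ?nab' ?nbc ?nac. move=> i j; rewrite !inE; case: (cover i) => [->|[->|->]]; case: (cover j) => [->|[->|->]]; rewrite ?eqxx ?nca ?ncb ?nac ?nbc ?nab' ?nba //= => _ _; rewrite ?ba ?bb ?bc /=; first [done | lra].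
    + by rewrite /Gb er_pair ?nbc // bb bc.
  - apply: (gen2 (A := pol.1) (S0 := [set a; c])) => //.
    + split; first by rewrite cards2 ?nab' ?nbc ?nac. move=> i j; rewrite !inE; case: (cover i) => [->|[->|->]]; case: (cover j) => [->|[->|->]]; rewrite ?eqxx ?nca ?ncb ?nac ?nbc ?nab' ?nba //= => _ _; rewrite ?ba ?bb ?bc /=; first [done | lra].
    + by rewrite /Gb er_pair ?nac // ba bc.
  - apply: (gen2 (A := pol.1) (S0 := [set a; b])) => //.
    + split; first by rewrite cards2 ?nab' ?nbc ?nac. move=> i j; rewrite !inE; case: (cover i) => [->|[->|->]]; case: (cover j) => [->|[->|->]]; rewrite ?eqxx ?nca ?ncb ?nac ?nbc ?nab' ?nba //= => _ _; rewrite ?ba ?bb ?bc /=; first [done | lra].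
    + by rewrite /Gb er_pair // ba bb.
have eqV : 1 - (1 - w a) * (1 - w b) +
   \sum_(x : bool) \sum_(y : bool) pr (w a) x * pr (w b) y * Gb x y =
   V3 p01 p11 (w a) (w b) (w c).
  by rewrite !big_bool /Gb /pr /V3 /=; ring.
have prp : forall x y, 0 <= pr (w a) x * pr (w b) y.
  move: (hw a) (hw b) => /andP[? ?] /andP[? ?].
  by case; case; rewrite /pr; apply: mulr_ge0; lra.
rewrite (total_sum p01 p11 w nab eA) -eqV; split.
  rewrite lerD2l; apply: ler_sum => x _; apply: ler_sum => y _.
  by apply: ler_wpM2l; [exact: prp | exact: (step x y).1].
move=> top; congr (_ + _); apply: eq_bigr => x _; apply: eq_bigr => y _.
by rewrite (step x y).2.
Qed.

Lemma compl_card (N : nat) (A : {set 'I_N}) : #|A| = 2%N -> #|~: A| = (N - 2)%N.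
Proof. move=> h; have := cardsC A; rewrite card_ord h => E; lia. Qed.

Lemma full_set (N : nat) (A : {set 'I_N}) : #|A| = N -> A = setT.
Proof.
by move=> h; apply/eqP; rewrite eqEcard subsetT cardsT card_ord h leqnn.
Qed.

Lemma case_N (N : nat) : (2 <= N <= 4)%N -> N = 2%N \/ N = 3%N \/ N = 4%N.
Proof. move=> /andP[h1 h2]; lia. Qed.

Unset Implicit Arguments.

Theorem theorem2 (R : realFieldType) (N : nat) (p01 p11 : R) (w : 'I_N -> R)
  (pol_m : policy N) :
  (2 <= N <= 4)%N ->
  0 <= p01 <= 1 -> 0 <= p11 <= 1 -> p11 < p01 ->
  (forall i, 0 <= w i <= 1) ->
  is_myopic 2 p01 p11 w pol_m ->
  valid_policy 2 pol_m /\
  (forall pol : policy N, valid_policy 2 pol ->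
     total_reward p01 p11 w pol <= total_reward p01 p11 w pol_m).
Proof.
move=> hN /andP[p01a p01b] /andP[p11a p11b] hlt hw [[cA topA] hm].
have hle : p11 <= p01 by apply: ltW.
split; first by split => // o; case: (hm o).
move=> pol [cP hP].
have hq : forall o, #|pol_m.2 o| = 2%N by move=> o; case: (hm o).
have [a1 [a2 [n12 eA]]] : exists x y, x != y /\ pol_m.1 = [set x; y].
  by apply/cards2P; rewrite cA.
have [x [y [nxy eP]]] : exists x y, x != y /\ pol.1 = [set x; y].
  by apply/cards2P; rewrite cP.
have cCA := compl_card cA; have cCP := compl_card cP.
have top1 : forall j, j \notin pol_m.1 -> w j <= w a1.
  by move=> j hj; apply: topA => //; rewrite eA !inE eqxx.
have top2 : forall j, j \notin pol_m.1 -> w j <= w a2.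
  by move=> j hj; apply: topA => //; rewrite eA !inE eqxx orbT.
case: (case_N hN) => [EN|[EN|EN]].
-
  have e1 : pol.1 = pol_m.1.
    rewrite (full_set (etrans cP (esym EN))).
    by rewrite (full_set (etrans cA (esym EN))).
  have e2 : forall o, pol.2 o = pol_m.2 o.
    move=> o; rewrite (full_set (etrans (hP o) (esym EN))).
    by rewrite (full_set (etrans (hq o) (esym EN))).
  rewrite le_eqVlt; apply/orP; left; apply/eqP.
  rewrite /total_reward e1; congr (_ + _); apply: eq_bigr => s _; by rewrite e2.
-
  move: (etrans cCA (congr1 (fun n => (n - 2)%N) EN)) (etrans cCP (congr1 (fun n => (n - 2)%N) EN)) => /= {}cCA {}cCP.
  have [a3 eCA] : exists z, ~: pol_m.1 = [set z] by apply/cards1P; rewrite cCA.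
  have [z eCP] : exists z, ~: pol.1 = [set z] by apply/cards1P; rewrite cCP.
  have a3A : a3 \notin pol_m.1 by rewrite -in_setC eCA inE.
  have zP : z \notin pol.1 by rewrite -in_setC eCP inE.
  have h31 := top1 _ a3A; have h32 := top2 _ a3A.
  have cover : forall i, i = a1 \/ i = a2 \/ i = a3.
    move=> i; case: (boolP (i \in pol_m.1)) => [|iA].
      by rewrite eA => /in2 [->|->]; auto.
    have : i \in ~: pol_m.1 by rewrite inE.
    by rewrite eCA inE => /eqP ->; auto.
  have D : [&& x != y, z != x & z != y].
    by move: zP; rewrite eP !inE negb_or => /andP[-> ->]; rewrite nxy.
  have [le1 _] := K3 p11a hle p01b hw nxy eP eCP hP.
  have [_ eq1] := K3 p11a hle p01b hw n12 eA eCA hq.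
  rewrite (eq1 hm); apply: le_trans le1 _.
  have B13 : V3 p01 p11 (w a1) (w a3) (w a2) <= V3 p01 p11 (w a1) (w a2) (w a3).
    by apply: V3_sw => //; case/andP: (hw a1).
  have B23 : V3 p01 p11 (w a2) (w a3) (w a1) <= V3 p01 p11 (w a1) (w a2) (w a3).
    by rewrite [X in _ <= X]V3_ab; apply: V3_sw => //; case/andP: (hw a2).
  have F := lexx (V3 p01 p11 (w a1) (w a2) (w a3)).
  case: (cover x) => [Ex|[Ex|Ex]]; subst x; case: (cover y) => [Ey|[Ey|Ey]]; subst y;
    try (by move: D; rewrite eqxx /= ?andbF);
    case: (cover z) => [Ez|[Ez|Ez]]; subst z;
    try (by move: D; rewrite eqxx /= ?andbF);
    first [assumption | rewrite V3_ab; assumption].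
-
  move: (etrans cCA (congr1 (fun n => (n - 2)%N) EN)) (etrans cCP (congr1 (fun n => (n - 2)%N) EN)) => /= {}cCA {}cCP.
  have [a3 [a4 [n34 eCA]]] : exists x y, x != y /\ ~: pol_m.1 = [set x; y].
    by apply/cards2P; rewrite cCA.
  have [z [t [nzt eCP]]] : exists x y, x != y /\ ~: pol.1 = [set x; y].
    by apply/cards2P; rewrite cCP.
  have a3A : a3 \notin pol_m.1 by rewrite -in_setC eCA !inE eqxx.
  have a4A : a4 \notin pol_m.1 by rewrite -in_setC eCA !inE eqxx orbT.
  have zP : z \notin pol.1 by rewrite -in_setC eCP !inE eqxx.
  have tP : t \notin pol.1 by rewrite -in_setC eCP !inE eqxx orbT.
  have h31 := top1 _ a3A; have h32 := top2 _ a3A.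
  have h41 := top1 _ a4A; have h42 := top2 _ a4A.
  have cover : forall i, i = a1 \/ i = a2 \/ i = a3 \/ i = a4.
    move=> i; case: (boolP (i \in pol_m.1)) => [|iA].
      by rewrite eA => /in2 [->|->]; auto.
    have : i \in ~: pol_m.1 by rewrite inE.
    by rewrite eCA => /in2 [->|->]; auto.
  have D : [&& x != y, z != t, z != x, z != y, t != x & t != y].
    move: zP tP; rewrite eP !inE !negb_or => /andP[-> ->] /andP[-> ->].
    by rewrite nxy nzt.
  have [le1 _] := K4 p11a hle p01b hw nxy nzt eP eCP hP.
  have [_ eq1] := K4 p11a hle p01b hw n12 n34 eA eCA hq.
  rewrite (eq1 hm); apply: le_trans le1 _.
  have w1 := hw a1; have w2 := hw a2; have w3 := hw a3; have w4 := hw a4.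
  have B13 : V4 p01 p11 (w a1) (w a3) (w a2) (w a4) <= V4 p01 p11 (w a1) (w a2) (w a3) (w a4).
    exact: V4_sw.
  have B14 : V4 p01 p11 (w a1) (w a4) (w a2) (w a3) <= V4 p01 p11 (w a1) (w a2) (w a3) (w a4).
    by rewrite [X in _ <= X]V4_cd; apply: V4_sw.
  have B23 : V4 p01 p11 (w a2) (w a3) (w a1) (w a4) <= V4 p01 p11 (w a1) (w a2) (w a3) (w a4).
    by rewrite [X in _ <= X]V4_ab; apply: V4_sw.
  have B24 : V4 p01 p11 (w a2) (w a4) (w a1) (w a3) <= V4 p01 p11 (w a1) (w a2) (w a3) (w a4).
    by rewrite [X in _ <= X]V4_ab [X in _ <= X]V4_cd; apply: V4_sw.
  have B34 : V4 p01 p11 (w a3) (w a4) (w a1) (w a2) <= V4 p01 p11 (w a1) (w a2) (w a3) (w a4).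
    apply: le_trans B13; rewrite [X in _ <= X]V4_cd.
    apply: le_trans (_ : _ <= V4 p01 p11 (w a3) (w a1) (w a4) (w a2)) _.
      exact: V4_sw.
    by rewrite V4_ab V4_cd.
  have F := lexx (V4 p01 p11 (w a1) (w a2) (w a3) (w a4)).
  case: (cover x) => [Ex|[Ex|[Ex|Ex]]]; subst x; case: (cover y) => [Ey|[Ey|[Ey|Ey]]]; subst y;
    try (by move: D; rewrite eqxx /= ?andbF);
    case: (cover z) => [Ez|[Ez|[Ez|Ez]]]; subst z;
    try (by move: D; rewrite eqxx /= ?andbF);
    case: (cover t) => [Et|[Et|[Et|Et]]]; subst t;
    try (by move: D; rewrite eqxx /= ?andbF);
    first [assumption | rewrite V4_ab; assumption | rewrite V4_cd; assumption
          | rewrite V4_ab V4_cd; assumption].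
Qed.
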